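(* Let $\mathcal{A}$ be a line arrangement in $\mathbb{P}^2_{\mathbb{C}}$ which is not of class $\mathcal{C}_{\le 3}$ of simple type. Then there exist six distinct lines $H_1,\dots,H_6\in\mathcal{A}$ such that $H_1\cap H_2\cap H_3\ne\emptyset$, $H_4\cap H_5\cap H_6\ne\emptyset$, and $(H_1\cup H_2\cup H_3)\cap(H_4\cup H_5\cup H_6)$ consists of exactly $9$ points.
   Context: $\operatorname{mult}(\mathcal{A})$ is the set of points on at least three lines of $\mathcal{A}$. $\mathcal{A}$ is of type $\mathcal{C}_k$ if $k$ is the minimal number of lines of $\mathcal{A}$ whose union contains $\operatorname{mult}(\mathcal{A})$. ''$\mathcal{C}_{\le 3}$ of simple type'' means of type $\mathcal{C}_0,\mathcal{C}_1,\mathcal{C}_2$, or of type $\mathcal{C}_3$ such that there exist $H_1,H_2,H_3\in\mathcal{A}$ with $\operatorname{mult}(\mathcal{A})\subset H_1\cup H_2\cup H_3$ and either (i) $H_1\cap H_2\cap H_3=\emptyset$ and exactly one multiple point lies on $H_1\setminus(H_2\cup H_3)$, or (ii) $H_1\cap H_2\cap H_3\ne\emptyset$. *)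

(* Defs.v *)
(* Projective plane P^2 over an algebraically closed
   numeric field F (e.g. the complex numbers). *)
From HB Require Import structures.
From mathcomp Require Import all_boot all_order all_algebra.
Set Implicit Arguments. Unset Strict Implicit. Unset Printing Implicit Defensive.
Import Order.TTheory GRing.Theory Num.Theory.
Local Open Scope ring_scope.

Section Arr.
Variable F : numClosedFieldType.

(* Homogeneous coordinates: points and lines of P^2 are nonzero row
   vectors of length 3, up to nonzero scalars. *)
Definition same_pt (u v : 'rV[F]_3) : Prop := exists c : F, c != 0 /\ v = c *: u.

Definition on_line (l p : 'rV[F]_3) : bool := \sum_(i < 3) l 0 i * p 0 i == 0.

Definition arrangement (n : nat) (L : 'I_n -> 'rV[F]_3) : Prop :=
  (forall i, L i != 0) /\ (forall i j, i != j -> ~ same_pt (L i) (L j)).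

Definition is_mult n (L : 'I_n -> 'rV[F]_3) (p : 'rV[F]_3) : Prop :=
  p != 0 /\ (3 <= #|[set i | on_line (L i) p]|)%N.

Definition covers n (L : 'I_n -> 'rV[F]_3) (S : {set 'I_n}) : Prop :=
  forall p, is_mult L p -> exists2 i, i \in S & on_line (L i) p.

Definition type_C n (L : 'I_n -> 'rV[F]_3) (k : nat) : Prop :=
  (exists S : {set 'I_n}, #|S| = k /\ covers L S) /\
  (forall S : {set 'I_n}, covers L S -> (k <= #|S|)%N).

Definition concurrent n (L : 'I_n -> 'rV[F]_3) (i j k : 'I_n) : Prop :=
  exists p, p != 0 /\ [&& on_line (L i) p, on_line (L j) p & on_line (L k) p].

Definition simple_type_le3 n (L : 'I_n -> 'rV[F]_3) : Prop :=
  type_C L 0 \/ type_C L 1 \/ type_C L 2 \/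
  (type_C L 3 /\
   exists h1 h2 h3 : 'I_n,
     [/\ h1 != h2, h1 != h3, h2 != h3,
         covers L [set h1; h2; h3] &
         (~ concurrent L h1 h2 h3 /\
            exists p, [/\ is_mult L p, on_line (L h1) p, ~~ on_line (L h2) p,
                          ~~ on_line (L h3) p &
                          forall q, is_mult L q -> on_line (L h1) q ->
                             ~~ on_line (L h2) q -> ~~ on_line (L h3) q ->
                             same_pt p q])
         \/ concurrent L h1 h2 h3]).

(* the set of projective points represented by the predicate P
   (assumed invariant under nonzero scaling) has exactly k elements *)
Definition has_k_points (P : 'rV[F]_3 -> Prop) (k : nat) : Prop :=
  exists s : 'I_k -> 'rV[F]_3,
    (forall a, s a != 0 /\ P (s a)) /\
    (forall a b, a != b -> ~ same_pt (s a) (s b)) /\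
    (forall p, p != 0 -> P p -> exists a, same_pt (s a) p).

End Arr.

(* Main.v *)
Require Import Defs.
From HB Require Import structures.
From mathcomp Require Import all_boot all_order all_algebra.
From Stdlib Require Import Classical.
Import Order.TTheory GRing.Theory Num.Theory.
Local Open Scope ring_scope.
Set Implicit Arguments. Unset Strict Implicit.


Lemma on_lineC (F : numClosedFieldType) (u v : 'rV[F]_3) : on_line u v = on_line v u.
Proof. by rewrite /on_line; congr (_ == 0); apply: eq_bigr => i _; rewrite mulrC. Qed.

Lemma on_lineZ (F : numClosedFieldType) (u v : 'rV[F]_3) (c : F) : c != 0 -> on_line u (c *: v) = on_line u v.
Proof.
move=> c0; rewrite /on_line.
have -> : \sum_(i < 3) u 0 i * (c *: v) 0 i = c * \sum_(i < 3) u 0 i * v 0 i.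
  rewrite mulr_sumr; apply: eq_bigr => i _; rewrite mxE mulrCA //.
by rewrite mulf_eq0 (negbTE c0).
Qed.

Lemma same_on (F : numClosedFieldType) (u v w : 'rV[F]_3) : same_pt u v -> on_line w u = on_line w v.
Proof. by case=> c [c0 ->]; rewrite on_lineZ. Qed.

Lemma same_sym (F : numClosedFieldType) (u v : 'rV[F]_3) : same_pt u v -> same_pt v u.
Proof.
case=> c [c0 ->]; exists c^-1; split; first by rewrite invr_eq0.
by rewrite scalerA mulVf // scale1r.
Qed.

Lemma sub_same (F : numClosedFieldType) (u v : 'rV[F]_3) : u != 0 -> v != 0 -> (v <= u)%MS -> same_pt u v.
Proof.
move=> u0 v0 /submxP [D vD]; rewrite vD in v0 *; have hD := mx11_scalar D.
move: v0; set c := D 0 0 in hD *; rewrite hD mul_scalar_mx => v0.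
exists c; split => //.
by apply/negP => /eqP D0; move: v0; rewrite D0 scale0r eqxx.
Qed.

Lemma rank1_same (F : numClosedFieldType) (u v : 'rV[F]_3) : u != 0 -> v != 0 -> (\rank (col_mx u v) <= 1)%N -> same_pt u v.
Proof.
move=> u0 v0 hr.
have := submx_refl (col_mx u v); rewrite col_mx_sub => /andP [Hu Hv].
have := mxrank_leqif_sup Hu => [[_ E]].
have : (col_mx u v <= u)%MS.
  by rewrite -E eqn_leq mxrankS //= rank_rV u0.
move=> Cu; apply: sub_same => //; exact: submx_trans Hv Cu.
Qed.

Definition Mt (F : numClosedFieldType) (u v : 'rV[F]_3) : 'M[F]_(3,1+1) := row_mx u^T v^T.

Lemma mulMt (F : numClosedFieldType) (w u v : 'rV[F]_3) : (w *m Mt u v == 0) = on_line w u && on_line w v.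
Proof.
rewrite /Mt mul_mx_row -row_mx0.
apply/eqP/andP.
  move=> /eq_row_mx [H1 H2]; split.
    have := congr1 (fun M : 'M_1 => M 0 0) H1; rewrite !mxE => H.
    by rewrite /on_line; apply/eqP; rewrite -[RHS]H; apply: eq_bigr => i _; rewrite !mxE.
  have := congr1 (fun M : 'M_1 => M 0 0) H2; rewrite !mxE => H.
  by rewrite /on_line; apply/eqP; rewrite -[RHS]H; apply: eq_bigr => i _; rewrite !mxE.
move=> [/eqP H1 /eqP H2].
congr row_mx; apply/matrixP => i j; rewrite !ord1 !mxE.
  by rewrite -[RHS]H1; apply: eq_bigr => k _; rewrite !mxE.
by rewrite -[RHS]H2; apply: eq_bigr => k _; rewrite !mxE.
Qed.

Lemma ortho_same (F : numClosedFieldType) (u v w1 w2 : 'rV[F]_3) : u != 0 -> v != 0 -> w1 != 0 -> w2 != 0 ->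
  on_line w1 u -> on_line w1 v -> on_line w2 u -> on_line w2 v ->
  ~ same_pt u v -> same_pt w1 w2.
Proof.
move=> u0 v0 w10 w20 h1 h2 h3 h4 nuv.
have r2 : \rank (Mt u v) = 2%N.
  apply/eqP; rewrite eqn_leq rank_leq_col /= /Mt -tr_col_mx mxrank_tr.
  by rewrite ltnNge; apply/negP => /(rank1_same u0 v0).
have rk : \rank (kermx (Mt u v)) = 1%N by rewrite mxrank_ker r2.
have K1 : (w1 <= kermx (Mt u v))%MS by apply/sub_kermxP; apply/eqP; rewrite mulMt h1 h2.
have K2 : (w2 <= kermx (Mt u v))%MS by apply/sub_kermxP; apply/eqP; rewrite mulMt h3 h4.
have := mxrank_leqif_sup K1 => [[_ E]].
have Kw : (kermx (Mt u v) <= w1)%MS by rewrite -E rk rank_rV w10.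
by apply: sub_same => //; exact: submx_trans K2 Kw.
Qed.

Lemma exists_pt (F : numClosedFieldType) (u v : 'rV[F]_3) : exists p, (p != 0) && (on_line u p && on_line v p).
Proof.
have rk : (0 < \rank (kermx (Mt u v)))%N.
  by rewrite mxrank_ker subn_gt0 ltnS rank_leq_col.
have : kermx (Mt u v) != 0 by rewrite -mxrank_eq0 -lt0n.
case: (boolP [exists i, row i (kermx (Mt u v)) != 0]).
  move=> /existsP [i ri] _; exists (row i (kermx (Mt u v))); rewrite ri /=.
  have : (row i (kermx (Mt u v)) <= kermx (Mt u v))%MS by exact: row_sub.
  by move/sub_kermxP/eqP; rewrite mulMt !(on_lineC u) !(on_lineC v).
move=> /existsPn H /negP []; apply/eqP/row_matrixP => i; rewrite row0.
by apply/eqP; rewrite -[_ == 0]negbK H.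
Qed.


Lemma card3 (T : finType) (x y z : T) : x != y -> x != z -> y != z -> #|[set x; y; z]| = 3.
Proof. move=> xy xz yz. by rewrite -setUA cardsU1 cardsU1 cards1 !inE negb_or xy xz yz. Qed.

Definition lines (F : numClosedFieldType) n (L : 'I_n -> 'rV[F]_3) (p : 'rV[F]_3) :=
  [set i | on_line (L i) p].

Lemma inter_le1 (F : numClosedFieldType) n (L : 'I_n -> 'rV[F]_3) (p q : 'rV[F]_3) :
  arrangement L -> p != 0 -> q != 0 -> ~ same_pt p q ->
  (#|lines L p :&: lines L q| <= 1)%N.
Proof.
move=> [Lnz Ld] p0 q0 npq; rewrite leqNgt; apply/negP => /card_gt1P [i [j [Hi Hj ij]]].
move: Hi Hj; rewrite !inE => /andP [ip iq] /andP [jp jq].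
apply: (Ld i j ij); apply: (ortho_same p0 q0) => //; rewrite on_lineC //.
Qed.

Lemma ab3 a b : (a < 3)%N -> (b < 3)%N ->
  (a * 3 + b < 9)%N /\ ((a * 3 + b) %/ 3 = a)%N /\ ((a * 3 + b) %% 3 = b)%N.
Proof. by case: a => [|[|[|]]] // _; case: b => [|[|[|]]]. Qed.

Lemma good_pair (F : numClosedFieldType) n (L : 'I_n -> 'rV[F]_3) (p q : 'rV[F]_3)
  (h1 h2 h3 h4 h5 h6 : 'I_n) :
  arrangement L -> p != 0 -> q != 0 ->
  h1 != h2 -> h2 != h3 -> h3 != h1 -> h4 != h5 -> h5 != h6 -> h6 != h4 ->
  h1 \in lines L p :\: lines L q -> h2 \in lines L p :\: lines L q ->
  h3 \in lines L p :\: lines L q ->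
  h4 \in lines L q :\: lines L p -> h5 \in lines L q :\: lines L p ->
  h6 \in lines L q :\: lines L p ->
  exists h1 h2 h3 h4 h5 h6 : 'I_n,
    uniq [:: h1; h2; h3; h4; h5; h6] /\
    concurrent L h1 h2 h3 /\
    concurrent L h4 h5 h6 /\
    has_k_points
      (fun p => (on_line (L h1) p || on_line (L h2) p || on_line (L h3) p)
             && (on_line (L h4) p || on_line (L h5) p || on_line (L h6) p))
      9.
Proof.
move=> arr p0 q0 d12 d23 d31 d45 d56 d64.
rewrite !inE => /andP [n1q h1p] /andP [n2q h2p] /andP [n3q h3p].
move=> /andP [n4p h4q] /andP [n5p h5q] /andP [n6p h6q].
have [Lnz Ld] := arr.
have dif : forall x y, on_line (L x) p -> ~~ on_line (L y) p -> x != y.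
  by move=> x y hx hy; apply/eqP => E; rewrite -E hx in hy.
exists h1, h2, h3, h4, h5, h6; split.
  rewrite /= !inE !negb_or d12 (eq_sym h1 h3) d31 d23 d45 (eq_sym h4 h6) d64 d56 /=.
  by rewrite !dif.
split; first by exists p; rewrite p0 h1p h2p h3p.
split; first by exists q; rewrite q0 h4q h5q h6q.
pose fA a := nth h1 [:: h1; h2; h3] a.
pose fB b := nth h4 [:: h4; h5; h6] b.
have FA : forall a, (a < 3)%N -> on_line (L (fA a)) p && ~~ on_line (L (fA a)) q.
  by case=> [|[|[|]]] //= _; apply/andP.
have FB : forall b, (b < 3)%N -> on_line (L (fB b)) q && ~~ on_line (L (fB b)) p.
  by case=> [|[|[|]]] //= _; apply/andP.
have FAi : forall a a', (a < 3)%N -> (a' < 3)%N -> a != a' -> fA a != fA a'.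
  by case=> [|[|[|]]] // [|[|[|]]] //= _ _ _; rewrite // eq_sym.
have FBi : forall b b', (b < 3)%N -> (b' < 3)%N -> b != b' -> fB b != fB b'.
  by case=> [|[|[|]]] // [|[|[|]]] //= _ _ _; rewrite // eq_sym.
have FAc : forall x, on_line (L h1) x || on_line (L h2) x || on_line (L h3) x ->
    exists2 a, (a < 3)%N & on_line (L (fA a)) x.
  move=> x /orP [/orP [H|H]|H]; [exists 0%N | exists 1%N | exists 2%N] => //.
have FBc : forall x, on_line (L h4) x || on_line (L h5) x || on_line (L h6) x ->
    exists2 b, (b < 3)%N & on_line (L (fB b)) x.
  move=> x /orP [/orP [H|H]|H]; [exists 0%N | exists 1%N | exists 2%N] => //.
have KA : forall a b a' x, (a < 3)%N -> (b < 3)%N -> (a' < 3)%N -> a != a' -> x != 0 ->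
    on_line (L (fA a)) x -> on_line (L (fB b)) x -> ~~ on_line (L (fA a')) x.
  move=> a b a' x Ha Hb Ha' aa' x0 xa xb; apply/negP => xa'.
  have /andP [pa _] := FA a Ha; have /andP [pa' _] := FA a' Ha'.
  have /andP [_ pb] := FB b Hb.
  case: (classic (same_pt x p)) => [sxp | nxp].
    by move: pb; rewrite -(same_on _ sxp) xb.
  apply: (Ld _ _ (FAi a a' Ha Ha' aa')).
  by apply: (ortho_same x0 p0) => //; apply: Lnz.
have KB : forall a b b' x, (a < 3)%N -> (b < 3)%N -> (b' < 3)%N -> b != b' -> x != 0 ->
    on_line (L (fA a)) x -> on_line (L (fB b)) x -> ~~ on_line (L (fB b')) x.
  move=> a b b' x Ha Hb Hb' bb' x0 xa xb; apply/negP => xb'.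
  have /andP [qb _] := FB b Hb; have /andP [qb' _] := FB b' Hb'.
  have /andP [_ qa] := FA a Ha.
  case: (classic (same_pt x q)) => [sxq | nxq].
    by move: qa; rewrite -(same_on _ sxq) xa.
  apply: (Ld _ _ (FBi b b' Hb Hb' bb')).
  by apply: (ortho_same x0 q0) => //; apply: Lnz.
pose s (i : 'I_9) := xchoose (exists_pt (L (fA (i %/ 3)%N)) (L (fB (i %% 3)%N))).
have sP : forall i, (s i != 0) && (on_line (L (fA (i %/ 3)%N)) (s i) && on_line (L (fB (i %% 3)%N)) (s i)).
  by move=> i; exact: (xchooseP (exists_pt (L (fA (i %/ 3)%N)) (L (fB (i %% 3)%N)))).
have lt1 : forall i : 'I_9, (i %/ 3 < 3)%N by move=> i; rewrite ltn_divLR.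
have lt2 : forall i : 'I_9, (i %% 3 < 3)%N by move=> i; rewrite ltn_pmod.
exists s; split; [|split].
- move=> i; have /and3P [s0 sa sb] := sP i; split => //.
  apply/andP; split.
    have : on_line (L (fA (i %/ 3)%N)) (s i) by [].
    by move: (lt1 i); case: (i %/ 3)%N => [|[|[|]]] //= _ ->; rewrite ?orbT.
  by move: (lt2 i) sb; case: (i %% 3)%N => [|[|[|]]] //= _ ->; rewrite ?orbT.
- move=> i j ij sij.
  have /and3P [si0 sia sib] := sP i; have /and3P [sj0 sja sjb] := sP j.
  case: (eqVneq (i %/ 3)%N (j %/ 3)%N) => [E1|N1].
    case: (eqVneq (i %% 3)%N (j %% 3)%N) => [E2|N2].
      by move: ij; rewrite -val_eqE /= (divn_eq i 3) (divn_eq j 3) E1 E2 eqxx.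
    have := KB _ _ _ _ (lt1 i) (lt2 i) (lt2 j) N2 si0 sia sib.
    by rewrite (same_on _ sij) sjb.
  have := KA _ _ _ _ (lt1 i) (lt2 i) (lt1 j) N1 si0 sia sib.
  by rewrite (same_on _ sij) sja.
- move=> x x0 /andP [/FAc [a Ha xa] /FBc [b Hb xb]].
  have [Hi [E1 E2]] := ab3 Ha Hb.
  exists (Ordinal Hi).
  have /and3P [si0 sia sib] := sP (Ordinal Hi).
  rewrite /= E1 E2 in sia sib.
  case: (classic (same_pt (s (Ordinal Hi)) x)) => // nsx.
  have /andP [pa _] := FA a Ha; have /andP [_ pb] := FB b Hb.
  have nab : fA a != fB b by apply: dif.
  exfalso; apply: (Ld _ _ nab).
  by apply: (ortho_same si0 x0) => //; apply: Lnz.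
Qed.

Lemma simple_of (F : numClosedFieldType) n (L : 'I_n -> 'rV[F]_3) :
  (exists S, covers L S /\ (#|S| <= 2)%N) \/
  (exists h1 h2 h3, [/\ h1 != h2, h1 != h3, h2 != h3, covers L [set h1; h2; h3] &
                        concurrent L h1 h2 h3]) ->
  simple_type_le3 L.
Proof.
move=> H.
case: (classic (exists S : {set 'I_n}, #|S| = 0%N /\ covers L S)) => [E0|N0].
  by left; split => // S _.
case: (classic (exists S : {set 'I_n}, #|S| = 1%N /\ covers L S)) => [E1|N1].
  right; left; split => // S cS; rewrite lt0n; apply/negP => /eqP h; apply: N0; by exists S.
case: (classic (exists S : {set 'I_n}, #|S| = 2%N /\ covers L S)) => [E2|N2].
  right; right; left; split => // S cS.
  case E: #|S| => [|[|]] //; exfalso; [apply: N0 | apply: N1]; by exists S.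
have ge3 : forall S, covers L S -> (3 <= #|S|)%N.
  move=> S cS; case E: #|S| => [|[|[|]]] //; exfalso; [apply: N0 | apply: N1 | apply: N2]; by exists S.
case: H => [[S [cS hS]] | [h1 [h2 [h3 [d12 d13 d23 cv cc]]]]].
  by have := ge3 S cS; rewrite leqNgt ltnS hS.
right; right; right; split.
  split => //; exists [set h1; h2; h3]; split => //; exact: card3.
by exists h1, h2, h3; split => //; right.
Qed.

Lemma cover_exists (F : numClosedFieldType) n (L : 'I_n -> 'rV[F]_3) :
  arrangement L ->
  (forall p q, p != 0 -> q != 0 -> (2 < #|lines L p :\: lines L q|)%N ->
      (2 < #|lines L q :\: lines L p|)%N -> False) ->
  (exists S, covers L S /\ (#|S| <= 2)%N) \/
  (exists h1 h2 h3, [/\ h1 != h2, h1 != h3, h2 != h3, covers L [set h1; h2; h3] &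
                        concurrent L h1 h2 h3]).
Proof.
move=> arr NG.
case: (classic (exists a, is_mult L a /\ (#|lines L a| <= 3)%N)) => [[a [[a0 am] a3]] | Nm].
  right.
  have c3 : #|lines L a| = 3 by apply/eqP; rewrite eqn_leq a3 am.
  have /card_gt2P [h1 [h2 [h3 [[m1 m2 m3] [d12 d23 d31]]]]] : (2 < #|lines L a|)%N by rewrite c3.
  have d13 : h1 != h3 by rewrite eq_sym.
  have E : lines L a = [set h1; h2; h3].
    apply/eqP; rewrite eq_sym eqEcard c3 (card3 d12 d13 d23) leqnn andbT.
    by apply/subsetP => x; rewrite !in_setU !in_set1 => /orP [/orP [/eqP->|/eqP->]|/eqP->].
  exists h1, h2, h3; split => //.
    rewrite -E => x [x0 xm].
    case: (classic (same_pt a x)) => [sax | nax].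
      by exists h1 => //; rewrite -(same_on _ sax); move: m1; rewrite inE.
    case: (boolP ((lines L a :&: lines L x) == set0)) => [/eqP I0 | /set0Pn [i]].
      exfalso; apply: (NG a x a0 x0).
        by rewrite cardsD I0 cards0 subn0 c3.
      by rewrite cardsD setIC I0 cards0 subn0.
    by rewrite inE => /andP [ia ix]; exists i => //; move: ix; rewrite inE.
  by exists a; move: m1 m2 m3; rewrite !inE => -> -> ->; rewrite a0.
case: (classic (exists a, is_mult L a)) => [[a [a0 am]] | Nm0].
  left.
  have big : forall x, is_mult L x -> (3 < #|lines L x|)%N.
    move=> x xm; rewrite ltnNge; apply/negP => h; apply: Nm; by exists x.
  have : (0 < #|lines L a|)%N by apply: leq_trans am.
  move=> /card_gt0P [i0 i0a]; exists [set i0]; split; last by rewrite cards1.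
  move=> x [x0 xm].
  case: (classic (same_pt a x)) => [sax | nax].
    by exists i0; rewrite ?set11 // -(same_on _ sax); move: i0a; rewrite inE.
  exfalso; apply: (NG a x a0 x0).
    rewrite cardsD ltn_subRL; apply: leq_ltn_trans (big a (conj a0 am)).
    by rewrite -[3%N]/(1 + 2)%N leq_add2r (inter_le1 arr a0 x0 nax).
  rewrite cardsD ltn_subRL; apply: leq_ltn_trans (big x (conj x0 xm)).
  rewrite -[3%N]/(1 + 2)%N leq_add2r; apply: (inter_le1 arr x0 a0).
  by move/same_sym.
left; exists set0; split; last by rewrite cards0.
by move=> x xm; exfalso; apply: Nm0; exists x.
Qed.

Theorem mainTheorem10 (F : numClosedFieldType) (n : nat) (L : 'I_n -> 'rV[F]_3) :
  arrangement L -> ~ simple_type_le3 L ->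
  exists h1 h2 h3 h4 h5 h6 : 'I_n,
    uniq [:: h1; h2; h3; h4; h5; h6] /\
    concurrent L h1 h2 h3 /\
    concurrent L h4 h5 h6 /\
    has_k_points
      (fun p => (on_line (L h1) p || on_line (L h2) p || on_line (L h3) p)
             && (on_line (L h4) p || on_line (L h5) p || on_line (L h6) p))
      9.
Proof.
move=> arr Hns; apply: NNPP => Hng; apply: Hns; apply: simple_of.
apply: cover_exists => // p q p0 q0.
move=> /card_gt2P [h1 [h2 [h3 [[m1 m2 m3] [d12 d23 d31]]]]].
move=> /card_gt2P [h4 [h5 [h6 [[m4 m5 m6] [d45 d56 d64]]]]].
by apply: Hng; exact: (good_pair arr p0 q0 d12 d23 d31 d45 d56 d64 m1 m2 m3 m4 m5 m6).
Qed.
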